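(* Let $P>0$, $K\le N$, and for $\mathbf u\in\mathbb R^N$, $S\subseteq[N]$, $\mathbf p\in[0,P]^N$ let $Q(\mathbf u;S,\mathbf p)=\frac{\sum_{j\in S}p_je^{u_j}}{1+\sum_{j\in S}e^{u_j}}$, $q_i(S,\mathbf p|e^{\mathbf u})=\frac{e^{u_i}}{1+\sum_{j\in S}e^{u_j}}$ ($i\in S$) and $q_0(S,\mathbf p|e^{\mathbf u})=\frac1{1+\sum_{j\in S}e^{u_j}}$. (i) For any $(S,\mathbf p)\in\mathcal S_K\times[0,P]^N$ and $\mathbf u,\mathbf u'\in\mathbb R^N$, with $\mathbf w=\mathbf u'-\mathbf u$, $$|Q(\mathbf u';S,\mathbf p)-Q(\mathbf u;S,\mathbf p)|\le\sqrt{\sum_{j\in S}e^{u_j}|p_j-Q(\mathbf u;S,\mathbf p)|^2}\sqrt{\sum_{j\in S}q_j(S,\mathbf p|e^{\mathbf u})q_0(S,\mathbf p|e^{\mathbf u})w_j^2}+\frac32P\max_{j\in S}w_j^2.$$ (ii) Let $\mathbf u,\widetilde{\mathbf u}\in\mathbb R^N$ with $\widetilde{\mathbf u}\ge\mathbf u$ elementwise, let $(\widetilde S,\widetilde{\mathbf p})\in\operatorname{argmax}_{(S,\mathbf p)\in\mathcal S_K\times[0,P]^N}Q(\widetilde{\mathbf u};S,\mathbf p)$ and $\widetilde{\mathbf w}=\widetilde{\mathbf u}-\mathbf u$. Then $$|Q(\widetilde{\mathbf u};\widetilde S,\widetilde{\mathbf p})-Q(\mathbf u;\widetilde S,\widetilde{\mathbf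 p})|\le P\sqrt{\sum_{j\in\widetilde S}q_j(\widetilde S,\widetilde{\mathbf p}|e^{\widetilde{\mathbf u}})q_0(\widetilde S,\widetilde{\mathbf p}|e^{\widetilde{\mathbf u}})\widetilde w_j^2}+\frac32P\max_{j\in\widetilde S}\widetilde w_j^2.$$
   Context: $\mathcal S_K=\{S\subseteq[N]:|S|\le K\}$. The utility vector $\mathbf u$ is treated as a fixed vector, not depending on $\mathbf p$. *)

(* Defs.v *)
From HB Require Import structures.
From mathcomp Require Import all_boot all_order all_algebra.
From mathcomp Require Import all_classical all_reals all_analysis.
Set Implicit Arguments. Unset Strict Implicit. Unset Printing Implicit Defensive.
Import Order.TTheory GRing.Theory Num.Theory.
Local Open Scope ring_scope.

Section MNL.
Variables (R : realType) (N : nat).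

Definition denom (u : 'I_N -> R) (S : {set 'I_N}) : R :=
  1 + \sum_(j in S) expR (u j).

Definition Qrev (u : 'I_N -> R) (S : {set 'I_N}) (p : 'I_N -> R) : R :=
  (\sum_(j in S) p j * expR (u j)) / denom u S.

(* choice probabilities q_i(S,p | e^u) (i in S) and q_0(S,p | e^u);
   they do not depend on p, the argument is kept to mirror the paper *)
Definition qi (S : {set 'I_N}) (p : 'I_N -> R) (u : 'I_N -> R) (i : 'I_N) : R :=
  expR (u i) / denom u S.
Definition q0 (S : {set 'I_N}) (p : 'I_N -> R) (u : 'I_N -> R) : R :=
  1 / denom u S.

Definition feasible (K : nat) (P : R) (S : {set 'I_N}) (p : 'I_N -> R) : Prop :=
  (#|S| <= K)%N /\ (forall j, 0 <= p j <= P).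

Definition maxS (S : {set 'I_N}) (x : 'I_N -> R) : R :=
  \big[Num.max/0]_(j in S) x j.

End MNL.

(* Main.v *)
Require Import Defs.
From HB Require Import structures.
From mathcomp Require Import all_boot all_order all_algebra.
From mathcomp Require Import all_classical all_reals all_analysis.
From mathcomp Require Import ring lra.
Import Order.TTheory GRing.Theory Num.Theory.
Local Open Scope ring_scope.

Section Der.
Variable R : realType.

Lemma dD {f g : R -> R} {x a b : R} : is_derive x 1 f a -> is_derive x 1 g b ->
  is_derive x (1:R) (fun t => f t + g t) (a + b).
Proof. move=> ha hb; exact: is_deriveD. Qed.

Lemma dM {f g : R -> R} {x a b : R} : is_derive x 1 f a -> is_derive x 1 g b ->
  is_derive x (1:R) (fun t => f t * g t) (f x * b + g x * a).
Proof. move=> ha hb; exact: is_deriveM. Qed.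

Lemma dV {f : R -> R} {x a : R} : f x != 0 -> is_derive x 1 f a ->
  is_derive x (1:R) (fun t => (f t)^-1) (- (f x) ^- 2 * a).
Proof. move=> h ha; exact: is_deriveV. Qed.

Lemma dN {f : R -> R} {x a : R} : is_derive x 1 f a ->
  is_derive x (1:R) (fun t => - f t) (- a).
Proof. move=> ha; exact: is_deriveN. Qed.

Lemma dC (c x : R) : is_derive x (1:R) (fun _ => c) 0.
Proof. exact: is_derive_cst. Qed.

Lemma dI (x : R) : is_derive x (1:R) (fun t => t) 1.
Proof. exact: is_derive_id. Qed.

Lemma dexp (c w x : R) : is_derive x (1:R) (fun t => expR (c + t * w)) (w * expR (c + x * w)).
Proof.
have hg : is_derive x (1:R) (fun t => c + t * w) w.
  apply: (is_derive_eq (dD (dC c x) (dM (dI x) (dC w x)))); ring.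
have := @is_derive1_comp _ expR (fun t => c + t * w) x _ _ (is_derive_expR (c + x * w)) hg.
by rewrite mulrC.
Qed.

Lemma dsum (I : Type) (r : seq I) (P : pred I) (F : I -> R -> R) (dF : I -> R) (x : R) :
 (forall i, is_derive x 1 (F i) (dF i)) ->
 is_derive x (1:R) (fun t => \sum_(i <- r | P i) F i t) (\sum_(i <- r | P i) dF i).
Proof.
move=> H; elim: r => [|i r IH].
  have -> : (fun t => \sum_(i <- [::] | P i) F i t) = (fun _ => 0).
    by apply: funext => t; rewrite big_nil.
  rewrite big_nil; exact: dC.
case Pi: (P i).
  have -> : (fun t => \sum_(j <- i :: r | P j) F j t) = (fun t => F i t + \sum_(j <- r | P j) F j t).
    by apply: funext => t; rewrite big_cons Pi.
  rewrite big_cons Pi; exact: (dD (H i) IH).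
have -> : (fun t => \sum_(j <- i :: r | P j) F j t) = (fun t => \sum_(j <- r | P j) F j t).
  by apply: funext => t; rewrite big_cons Pi.
by rewrite big_cons Pi.
Qed.


Variable N : nat.
Implicit Types (S : {set 'I_N}) (A c p w u : 'I_N -> R).

Definition G S c A := \sum_(j in S) c j * A j.
Definition one : 'I_N -> R := fun _ => 1.
Definition cw c w : 'I_N -> R := fun j => c j * w j.
Definition Den S A := 1 + G S one A.
Definition fF S p A := G S p A / Den S A.
Definition F1 S p w A := (G S (cw p w) A - fF S p A * G S (cw one w) A) / Den S A.
Definition F2 S p w A :=
  ((G S (cw (cw p w) w) A - F1 S p w A * G S (cw one w) A - fF S p A * G S (cw (cw one w) w) A) * Den S A
   - (G S (cw p w) A - fF S p A * G S (cw one w) A) * G S (cw one w) A) / (Den S A) ^+ 2.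
Definition At u w (t : R) : 'I_N -> R := fun j => expR (u j + t * w j).

Lemma Den_gt0 S A : (forall j, 0 <= A j) -> 0 < Den S A.
Proof.
move=> hA; rewrite /Den /G; apply: (lt_le_trans ltr01); rewrite lerDl.
by apply: sumr_ge0 => j _; rewrite /one mul1r.
Qed.

Lemma At_ge0 u w t j : 0 <= At u w t j.
Proof. exact: expR_ge0. Qed.

Lemma dG S c u w x : is_derive x (1:R) (fun t => G S c (At u w t)) (G S (cw c w) (At u w x)).
Proof.
have hj : forall j, is_derive x (1:R) (fun t => c j * expR (u j + t * w j)) (c j * (w j * expR (u j + x * w j))).
  by move=> j; apply: (is_derive_eq (dM (dC (c j) x) (dexp (u j) (w j) x))); ring.
have h := @dsum _ (index_enum 'I_N) (fun j => j \in S) (fun j t => c j * expR (u j + t * w j)) (fun j => c j * (w j * expR (u j + x * w j))) x hj.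
rewrite /G /At /cw; apply: (is_derive_eq h).
by apply: eq_bigr => j _; ring.
Qed.

Lemma dDen S u w x : is_derive x (1:R) (fun t => Den S (At u w t)) (G S (cw one w) (At u w x)).
Proof.
apply: (is_derive_eq (dD (dC 1 x) (dG S one u w x))); ring.
Qed.

Lemma dfF S p u w x : is_derive x (1:R) (fun t => fF S p (At u w t)) (F1 S p w (At u w x)).
Proof.
have hD := @Den_gt0 S _ (At_ge0 u w x).
have hD0 : Den S (At u w x) != 0 by rewrite gt_eqF.
have h := dM (dG S p u w x) (dV (f:=fun t => Den S (At u w t)) hD0 (dDen S u w x)).
rewrite {1}/fF; apply: (is_derive_eq h).
rewrite /F1 /fF; field; done.
Qed.

Lemma dF1 S p u w x : is_derive x (1:R) (fun t => F1 S p w (At u w t)) (F2 S p w (At u w x)).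
Proof.
have hD := @Den_gt0 S _ (At_ge0 u w x).
have hD0 : Den S (At u w x) != 0 by rewrite gt_eqF.
have h := dM (dD (dG S (cw p w) u w x) (dN (dM (dfF S p u w x) (dG S (cw one w) u w x)))) (dV (f:=fun t => Den S (At u w t)) hD0 (dDen S u w x)).
rewrite {1}/F1; apply: (is_derive_eq h).
rewrite /F2; field; done.
Qed.


Lemma expandX S A p w f m : \sum_(j in S) A j * (p j - f) * (w j - m) ^+ 2 =
  G S (cw (cw p w) w) A - 2 * m * G S (cw p w) A + m ^+ 2 * G S p A
  - f * G S (cw (cw one w) w) A + 2 * f * m * G S (cw one w) A - f * m ^+ 2 * G S one A.
Proof.
rewrite /G !mulr_sumr.
rewrite -sumrB -big_split -sumrB -big_split -sumrB /=.
by apply: eq_bigr => j _; rewrite /cw /one; ring.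
Qed.

Lemma expandY S A w m : \sum_(j in S) A j * (w j - m) ^+ 2 =
  G S (cw (cw one w) w) A - 2 * m * G S (cw one w) A + m ^+ 2 * G S one A.
Proof.
rewrite /G !mulr_sumr.
rewrite -sumrB -big_split /=.
by apply: eq_bigr => j _; rewrite /cw /one; ring.
Qed.

Lemma expandL S A p w f : \sum_(j in S) A j * (p j - f) * w j =
  G S (cw p w) A - f * G S (cw one w) A.
Proof.
rewrite /G !mulr_sumr -sumrB.
by apply: eq_bigr => j _; rewrite /cw /one; ring.
Qed.


Lemma fF_bounds S p A P : 0 <= P -> (forall j, 0 <= A j) -> (forall j, 0 <= p j <= P) ->
  0 <= fF S p A <= P.
Proof.
move=> hP hA hp; have hD := @Den_gt0 S A hA.
have g0ge : 0 <= G S p A.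
  by apply: sumr_ge0 => j _; case/andP: (hp j) => h1 h2; exact: mulr_ge0.
have g1ge : 0 <= G S one A.
  by apply: sumr_ge0 => j _; rewrite /one mul1r.
have g0le : G S p A <= P * G S one A.
  rewrite /G mulr_sumr; apply: ler_sum => j _; case/andP: (hp j)=> h1 h2.
  have h3 : 0 <= P - p j by lra.
  have := mulr_ge0 h3 (hA j); rewrite /one /=; nra.
apply/andP; split; first exact: divr_ge0 (ltW hD).
rewrite ler_pdivrMr // /Den mulrDr mulr1.
have : 0 <= P * G S one A by exact: mulr_ge0.
lra.
Qed.

Lemma F2_eq S p w A : (forall j, 0 <= A j) ->
  F2 S p w A * Den S A = \sum_(j in S) A j * (p j - fF S p A) * (w j - G S (cw one w) A / Den S A) ^+ 2
    - fF S p A * (G S (cw one w) A / Den S A) ^+ 2.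
Proof.
move=> hA; have hD := @Den_gt0 S A hA.
have hD0 : Den S A != 0 by rewrite gt_eqF.
rewrite expandX /F2 /F1 /fF; move: hD0; rewrite /Den => hD0; field; done.
Qed.

Lemma Y_eq S w A : (forall j, 0 <= A j) ->
  \sum_(j in S) A j * (w j - G S (cw one w) A / Den S A) ^+ 2 + (G S (cw one w) A / Den S A) ^+ 2
  = G S (cw (cw one w) w) A - (G S (cw one w) A) ^+ 2 / Den S A.
Proof.
move=> hA; have hD := @Den_gt0 S A hA.
have hD0 : Den S A != 0 by rewrite gt_eqF.
rewrite expandY; move: hD0; rewrite /Den => hD0; field; done.
Qed.

Lemma F2_bound S p w A P M : 0 <= P -> (forall j, 0 <= A j) -> (forall j, 0 <= p j <= P) ->
  (forall j, j \in S -> w j ^+ 2 <= M) -> 0 <= M -> `|F2 S p w A| <= P * M.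
Proof.
move=> hP hA hp hw hM.
have hD := @Den_gt0 S A hA.
have /andP[hf0 hfP] := @fF_bounds S p A P hP hA hp.
have eF2 := @F2_eq S p w A hA.
have eY := @Y_eq S w A hA.
move: hf0 hfP eF2 eY.
set f := fF S p A.
set D := Den S A.
set m := G S (cw one w) A / D.
set X := \sum_(j in S) A j * (p j - f) * (w j - m) ^+ 2.
set Y := \sum_(j in S) A j * (w j - m) ^+ 2.
set d1 := G S (cw one w) A.
set d2 := G S (cw (cw one w) w) A.
move=> hf0 hfP eF2 eY.
have hXu : X <= P * Y.
  rewrite /X /Y mulr_sumr; apply: ler_sum => j _; case/andP: (hp j) => h1 h2.
  have := mulr_ge0 (hA j) (sqr_ge0 (w j - m)).
  set s := (w j - m) ^+ 2; move=> hs.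
  have : A j * s * (P - (p j - f)) >= 0 by apply: mulr_ge0 => //; lra.
  nra.
have hXl : - (P * Y) <= X.
  rewrite /X /Y -mulNr mulr_sumr; apply: ler_sum => j _; case/andP: (hp j) => h1 h2.
  have := mulr_ge0 (hA j) (sqr_ge0 (w j - m)).
  set s := (w j - m) ^+ 2; move=> hs.
  have : A j * s * ((p j - f) + P) >= 0 by apply: mulr_ge0 => //; lra.
  nra.
have hm2 := sqr_ge0 m.
have hfm1 : 0 <= f * m ^+ 2 by exact: mulr_ge0.
have hfm2 : f * m ^+ 2 <= P * m ^+ 2 by exact: ler_wpM2r.
have hd1 : 0 <= d1 ^+ 2 / D by apply: divr_ge0; [exact: sqr_ge0| exact: ltW].
have hd2 : d2 <= M * D.
  have : d2 <= M * G S one A.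
    rewrite /d2 /G mulr_sumr; apply: ler_sum => j hj.
    rewrite /cw /one /=; have := hw j hj; have := hA j; nra.
  rewrite /D /Den mulrDr mulr1; lra.
have key : `|F2 S p w A * D| <= P * d2.
  rewrite eF2 ler_norml.
  have : P * (Y + m ^+ 2) <= P * d2.
    apply: ler_wpM2l => //; rewrite eY; lra.
  rewrite mulrDr => h; apply/andP; split; lra.
rewrite normrM (gtr0_norm hD) in key.
rewrite -(ler_pM2r hD).
apply: (le_trans key); rewrite -mulrA; exact: ler_wpM2l.
Qed.


Lemma expandCS S A x y t : \sum_(j in S) A j * (x j - t * y j) ^+ 2 =
  \sum_(j in S) A j * x j ^+ 2 - 2 * t * \sum_(j in S) A j * x j * y j + t ^+ 2 * \sum_(j in S) A j * y j ^+ 2.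
Proof.
rewrite !mulr_sumr -sumrB -big_split /=.
by apply: eq_bigr => j _; ring.
Qed.

Lemma CS S A x y : (forall j, 0 <= A j) ->
  (\sum_(j in S) A j * x j * y j) ^+ 2 <= (\sum_(j in S) A j * x j ^+ 2) * (\sum_(j in S) A j * y j ^+ 2).
Proof.
move=> hA.
have hc : 0 <= \sum_(j in S) A j * y j ^+ 2.
  by apply: sumr_ge0 => j _; apply: mulr_ge0 => //; exact: sqr_ge0.
have ha : 0 <= \sum_(j in S) A j * x j ^+ 2.
  by apply: sumr_ge0 => j _; apply: mulr_ge0 => //; exact: sqr_ge0.
case: (ltrP 0 (\sum_(j in S) A j * y j ^+ 2)) => hc'; last first.
  have c0 : \sum_(j in S) A j * y j ^+ 2 = 0 by apply/eqP; rewrite eq_le hc' hc.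
  have e := psumr_eq0P (fun j _ => mulr_ge0 (hA j) (sqr_ge0 (y j))) c0.
  have b0 : \sum_(j in S) A j * x j * y j = 0.
    apply: big1 => j hj.
    have := e j hj; move/eqP; rewrite mulf_eq0 expf_eq0 /= => /orP[/eqP->|/eqP->]; ring.
  by rewrite b0 c0 expr0n /= mulr0.
set a := \sum_(j in S) A j * x j ^+ 2.
set b := \sum_(j in S) A j * x j * y j.
set c := \sum_(j in S) A j * y j ^+ 2.
have h := expandCS S A x y (b / c).
have h0 : 0 <= \sum_(j in S) A j * (x j - b / c * y j) ^+ 2.
  by apply: sumr_ge0 => j _; apply: mulr_ge0 => //; exact: sqr_ge0.
rewrite h -/a -/b -/c in h0.
have e : a - 2 * (b / c) * b + (b / c) ^+ 2 * c = (a * c - b ^+ 2) / c.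
  by field; rewrite gt_eqF.
rewrite e in h0.
have := mulr_ge0 h0 (ltW hc'); rewrite divfK ?gt_eqF //; lra.
Qed.


Lemma der_of {f : R -> R} {x d : R} : is_derive x (1:R) f d -> derivable f x 1.
Proof. by case. Qed.

Lemma taylor2 (f d1 d2 : R -> R) (B : R) :
  (forall x, is_derive x (1:R) f (d1 x)) -> (forall x, is_derive x (1:R) d1 (d2 x)) ->
  (forall x, `|d2 x| <= B) -> `|f 1 - f 0 - d1 0| <= B / 2.
Proof.
move=> hf hd hB.
set K := f 1 - f 0 - d1 0.
pose h := fun t => f t + - (f 0 + (t * d1 0 + K * (t * t))).
pose dh := fun t => d1 t - (d1 0 + 2 * K * t).
have hh : forall x, is_derive x (1:R) h (dh x).
  move=> x; apply: (is_derive_eq (dD (hf x) (dN (dD (dC (f 0) x) (dD (dM (dI x) (dC (d1 0) x)) (dM (dC K x) (dM (dI x) (dI x)))))))).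
  rewrite /dh; ring.
have [c c01 ec] := MVT ltr01 (fun x _ => hh x) (derivable_within_continuous (fun x _ => der_of (hh x))).
have h1 : h 1 = 0 by rewrite /h /K; ring.
have h0 : h 0 = 0 by rewrite /h; ring.
rewrite h1 h0 subr0 /dh subr0 mulr1 in ec.
have c0 : 0 < c by move: c01; rewrite in_itv /= => /andP[].
have [d _ ed] := MVT c0 (fun x _ => hd x) (derivable_within_continuous (fun x _ => der_of (hd x))).
rewrite subr0 in ed.
have e2 : K = d2 d / 2.
  have : (2 * K - d2 d) * c = 0 by rewrite mulrBl -ed; lra.
  move/eqP; rewrite mulf_eq0 (gt_eqF c0) orbF subr_eq0 => /eqP <-; by field.
rewrite e2 normrM; have h2 : `|(2:R)^-1| = 2^-1 by rewrite ger0_norm. rewrite h2; have := hB d; lra.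
Qed.


Lemma maxS_ge S (x : 'I_N -> R) j : j \in S -> x j <= maxS S x.
Proof.
move=> hj; rewrite /maxS.
have : j \in index_enum 'I_N by rewrite mem_index_enum.
elim: (index_enum 'I_N) => [//|i r IH]; rewrite inE big_cons => /orP[/eqP <-|/IH h].
  by rewrite hj le_max lexx.
by case: (i \in S) => //; rewrite le_max h orbT.
Qed.

Lemma maxS_ge0 S (x : 'I_N -> R) : 0 <= maxS S x.
Proof.
rewrite /maxS; elim: (index_enum 'I_N) => [|i r IH]; first by rewrite big_nil.
by rewrite big_cons; case: (i \in S) => //; rewrite le_max IH orbT.
Qed.

Lemma fF_Qrev S p u : fF S p (fun j => expR (u j)) = Qrev u S p.
Proof.
rewrite /fF /Qrev /Den /denom /G; congr (_ / (1 + _)).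
by apply: eq_bigr => j _; rewrite /one mul1r.
Qed.

Lemma sqrt_bound (x y z : R) : 0 <= y -> 0 <= z -> x ^+ 2 <= y * z -> `|x| <= Num.sqrt y * Num.sqrt z.
Proof.
move=> hy hz h; rewrite -sqrtrM // -sqrtr_sqr ler_sqrt //; exact: mulr_ge0.
Qed.

Lemma partI K P S p u u' w : 0 < P -> feasible K P S p ->
  w = (fun j => u' j - u j) ->
  `|Qrev u' S p - Qrev u S p|
    <= Num.sqrt (\sum_(j in S) expR (u j) * `|p j - Qrev u S p| ^+ 2)
       * Num.sqrt (\sum_(j in S) qi S p u j * q0 S p u * w j ^+ 2)
     + 3 / 2 * P * maxS S (fun j => w j ^+ 2).
Proof.
move=> hP [hK hp] hw.
have hM0 := maxS_ge0 S (fun j => w j ^+ 2).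
have hwM : forall j, j \in S -> w j ^+ 2 <= maxS S (fun j => w j ^+ 2).
  by move=> j hj; have := @maxS_ge S (fun j => w j ^+ 2) j hj.
move: hM0 hwM; set M := maxS S (fun j => w j ^+ 2) => hM0 hwM.
have T := @taylor2 _ _ _ _ (fun x => dfF S p u w x) (fun x => dF1 S p u w x)
  (fun x => @F2_bound S p w _ P M (ltW hP) (At_ge0 u w x) hp hwM hM0).
have e1 : At u w 1 = fun j => expR (u' j).
  by apply: funext => j; rewrite /At hw mul1r addrC subrK.
have e0 : At u w 0 = fun j => expR (u j).
  by apply: funext => j; rewrite /At mul0r addr0.
rewrite /= e1 e0 !fF_Qrev in T.
set A := fun j => expR (u j).
have hA : forall j, 0 <= A j by move=> j; exact: expR_ge0.
have hD := @Den_gt0 S A hA.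
set Q := Qrev u S p.
have eQ : fF S p A = Q by rewrite /A fF_Qrev.
set L := F1 S p w A.
have eL : L = (\sum_(j in S) A j * (p j - Q) * w j) / Den S A.
  by rewrite /L /F1 expandL eQ.
have ea : \sum_(j in S) expR (u j) * `|p j - Q| ^+ 2 = \sum_(j in S) A j * (p j - Q) ^+ 2.
  by apply: eq_bigr => j _; rewrite real_normK ?num_real.
have ec : \sum_(j in S) qi S p u j * q0 S p u * w j ^+ 2 = (\sum_(j in S) A j * w j ^+ 2) / (Den S A) ^+ 2.
  rewrite mulr_suml; apply: eq_bigr => j _; rewrite /qi /q0.
  have -> : denom u S = Den S A.
    rewrite /denom /Den /G; congr (1 + _); by apply: eq_bigr => k _; rewrite /one mul1r.
  by rewrite /A; field; rewrite gt_eqF.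
have hLb : `|L| <= Num.sqrt (\sum_(j in S) A j * (p j - Q) ^+ 2) * Num.sqrt ((\sum_(j in S) A j * w j ^+ 2) / (Den S A) ^+ 2).
  apply: sqrt_bound.
  - by apply: sumr_ge0 => j _; apply: mulr_ge0 => //; exact: sqr_ge0.
  - apply: divr_ge0; last exact: sqr_ge0.
    by apply: sumr_ge0 => j _; apply: mulr_ge0 => //; exact: sqr_ge0.
  rewrite eL mulrA expr_div_n ler_pdivrMr ?exprn_gt0 //.
  rewrite divfK ?gt_eqF ?exprn_gt0 //.
  exact: CS.
rewrite ea ec.
have hPM : 0 <= P * M by apply: mulr_ge0 => //; exact: ltW.
have : `|Qrev u' S p - Q| <= `|Qrev u' S p - Q - L| + `|L|.
  by rewrite -[X in `|X|](subrK L) ler_normD.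
lra.
Qed.


Lemma partII K P u ut St pt wt : 0 < P -> feasible K P St pt ->
  (forall (S : {set 'I_N}) (p : 'I_N -> R), feasible K P S p -> Qrev ut S p <= Qrev ut St pt) ->
  wt = (fun j => ut j - u j) ->
  `|Qrev ut St pt - Qrev u St pt|
    <= P * Num.sqrt (\sum_(j in St) qi St pt ut j * q0 St pt ut * wt j ^+ 2)
     + 3 / 2 * P * maxS St (fun j => wt j ^+ 2).
Proof.
move=> hP hf hopt hwt.
have hI : `|Qrev u St pt - Qrev ut St pt|
    <= Num.sqrt (\sum_(j in St) expR (ut j) * `|pt j - Qrev ut St pt| ^+ 2)
       * Num.sqrt (\sum_(j in St) qi St pt ut j * q0 St pt ut * (u j - ut j) ^+ 2)
     + 3 / 2 * P * maxS St (fun j => (u j - ut j) ^+ 2)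
  := partI K P St pt ut u (fun j => u j - ut j) hP hf erefl.
have ew : (fun j => (u j - ut j) ^+ 2) = (fun j => wt j ^+ 2).
  by apply: funext => j; rewrite hwt -opprB sqrrN.
have e1 : \sum_(j in St) qi St pt ut j * q0 St pt ut * (u j - ut j) ^+ 2
        = \sum_(j in St) qi St pt ut j * q0 St pt ut * wt j ^+ 2.
  by apply: eq_bigr => j _; rewrite hwt -opprB sqrrN.
rewrite e1 ew distrC in hI.
have hA : forall j, 0 < expR (ut j) by move=> j; exact: expR_gt0.
set E := \sum_(j in St) expR (ut j).
have hE : 0 <= E by apply: sumr_ge0 => j _; exact: ltW.
have hD : 0 < denom ut St by rewrite /denom -/E; lra.
have hpt : forall j, j \in St -> pt j = P.
  move=> j hj; case: hf => hK hp; case/andP: (hp j) => h1 h2.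
  apply/eqP; rewrite eq_le h2 /= leNgt; apply/negP => hlt.
  pose p' := fun k => if k == j then P else pt k.
  have hf' : feasible K P St p'.
    split => // k; rewrite /p'; case: eqP => _; last exact: hp.
    by rewrite lexx andbT; exact: ltW.
  have := hopt St p' hf'.
  rewrite /Qrev ler_pM2r ?invr_gt0 //.
  rewrite (bigD1 j hj) [X in _ <= X](bigD1 j hj) /= /p' eqxx.
  have -> : \sum_(i in St | i != j) (if i == j then P else pt i) * expR (ut i)
          = \sum_(i in St | i != j) pt i * expR (ut i).
    by apply: eq_bigr => k /andP[_ hk]; rewrite (negbTE hk).
  have := hA j; nra.
have eQ : Qrev ut St pt = P * E / (1 + E).
  rewrite /Qrev /denom -/E mulr_sumr; congr (_ / _).
  by apply: eq_bigr => j hj; rewrite hpt.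
have eS : \sum_(j in St) expR (ut j) * `|pt j - Qrev ut St pt| ^+ 2
        = (P - Qrev ut St pt) ^+ 2 * E.
  rewrite /E mulr_sumr; apply: eq_bigr => j hj.
  by rewrite (hpt j hj) real_normK ?num_real // mulrC.
have hsq : Num.sqrt (\sum_(j in St) expR (ut j) * `|pt j - Qrev ut St pt| ^+ 2) <= P.
  rewrite eS eQ.
  have -> : (P - P * E / (1 + E)) ^+ 2 * E = P ^+ 2 * (E / (1 + E) ^+ 2).
    by field; rewrite gt_eqF //; lra.
  have hx : E / (1 + E) ^+ 2 <= 1.
    have h1E : 0 < 1 + E by lra.
    rewrite ler_pdivrMr ?exprn_gt0 // mul1r; nra.
  have hle : P ^+ 2 * (E / (1 + E) ^+ 2) <= P ^+ 2.
    have h3 : 0 <= 1 - E / (1 + E) ^+ 2 by lra.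
    have := mulr_ge0 (sqr_ge0 P) h3; nra.
  apply: (@le_trans _ _ (Num.sqrt (P ^+ 2))).
    by rewrite ler_sqrt ?sqr_ge0.
  by rewrite sqrtr_sqr gtr0_norm.
have hs2 := sqrtr_ge0 (\sum_(j in St) qi St pt ut j * q0 St pt ut * wt j ^+ 2).
have := ler_wpM2r hs2 hsq.
lra.
Qed.

End Der.

Theorem propositionC2 (R : realType) (N K : nat) (P : R) :
  0 < P -> (K <= N)%N ->
  (* (i) *)
  (forall (S : {set 'I_N}) (p u u' : 'I_N -> R),
     feasible K P S p ->
     let w := fun j => u' j - u j in
     `|Qrev u' S p - Qrev u S p|
       <= Num.sqrt (\sum_(j in S) expR (u j) * `|p j - Qrev u S p| ^+ 2)
          * Num.sqrt (\sum_(j in S) qi S p u j * q0 S p u * w j ^+ 2)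
        + 3 / 2 * P * maxS S (fun j => w j ^+ 2))
  /\
  (* (ii) *)
  (forall (u ut : 'I_N -> R) (St : {set 'I_N}) (pt : 'I_N -> R),
     (forall j, u j <= ut j) ->
     feasible K P St pt ->
     (forall (S : {set 'I_N}) (p : 'I_N -> R),
        feasible K P S p -> Qrev ut S p <= Qrev ut St pt) ->
     let wt := fun j => ut j - u j in
     `|Qrev ut St pt - Qrev u St pt|
       <= P * Num.sqrt (\sum_(j in St) qi St pt ut j * q0 St pt ut * wt j ^+ 2)
        + 3 / 2 * P * maxS St (fun j => wt j ^+ 2)).
Proof.
move=> hP _; split.
  move=> S p u u' hf; exact: (@partI R N K P S p u u' _ hP hf erefl).
move=> u ut St pt _ hf hopt; exact: (@partII R N K P u ut St pt _ hP hf hopt erefl).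
Qed.
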